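(* Let $n\ge3$ and consider the cycle graph $C_n$. For $i\in[n]$ let $\mathrm{Inc}_i^n:=i(i+1)\cdots n\,12\cdots(i-1)$. (1) If $i\ge4$, then for every $j\in[n]$: $B(j,\mathrm{Inc}_i^n,C_n)=i(i+1)\cdots j$ if $j\ge i$; $=n\,12\cdots j$ if $3\le j\le i-1$; $=12$ if $j=2$; $=1$ if $j=1$. Consequently the number of $C_n$-friendship parking functions with outcome $\mathrm{Inc}_i^n$ is $(n-i+1)!\,i!/3$. (2) If $i\le3$, then for every $j\in[n]$: $B(j,\mathrm{Inc}_i^n,C_n)=i\cdots j$ if $j\ge i$, and $=1\cdots j$ if $j\le i-1$. Consequently the number of $C_n$-friendship parking functions with outcome $\mathrm{Inc}_i^n$ is $(n+1-i)!\,(i-1)!$.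
   Context: $C_n$ ($n\ge3$) is the cycle graph with vertex set $[n]$ and edges $\{i,i+1\}$ for $i\in[n-1]$ and $\{n,1\}$. Permutations are in one-line notation. Friendship parking process for a graph $G$ on $[n]$ and a parking preference $p\in[n]^n$: cars $1,\dots,n$ enter in order into spots $1,\dots,n$ (initially empty); spot $k$ is available for car $i$ if it is unoccupied when $i$ enters and each of spots $k-1,k+1$ is unoccupied or occupied by a car adjacent to $i$ in $G$ (spots $0,n+1$ count as unoccupied); car $i$ parks in the first available spot $k\ge p_i$, failing otherwise. $p$ is a $G$-friendship parking function if all cars park; its outcome is the permutation $\pi$ with $\pi_k$ the car in spot $k$ at the end. Blockers: for a permutation $\pi$ that is a Hamiltonian path of $G$ (i.e. $\{\pi_k,\pi_{k+1}\}$ is an edge for all $k$) and $i\in[n]$, $j=\pi_k$ is a blocker for $i$ if (1) $j\le i$, or (2) $j>i$ and some $\ell\in\{\pi_{k-1},\pi_{k+1}\}$ satisfies $\ell<i$ and $\ell$ not adjacent to $i$ in $G$. The blocking sequence $B(i,\pi,G)$ is the longest contiguous block of $\pi$ ending at $i$ consisting of blockers for $i$. *)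

(* Defs.v *)
(* Vertices, cars and spots are the naturals 1..n;
   permutations / parking preferences are sequences (one-line notation). *)
From mathcomp Require Import all_boot.
Set Implicit Arguments.
Unset Strict Implicit.
Unset Printing Implicit Defensive.

Definition cycle_adj (n : nat) : rel nat := fun a b =>
  [&& 1 <= a <= n, 1 <= b <= n &
   [|| b == a.+1, a == b.+1, (a == n) && (b == 1) | (a == 1) && (b == n)]].

(* Contents of spot k (spots 1..n) in the parking lot s (s`_(k-1) is spot k);
   0 means unoccupied; spots 0 and n+1 are always unoccupied. *)
Definition occ (s : seq nat) (k : nat) : nat :=
  if k is k'.+1 then nth 0 s k' else 0.

Definition available (G : rel nat) (s : seq nat) (i k : nat) : bool :=
  [&& occ s k == 0,
      (occ s k.-1 == 0) || G (occ s k.-1) i &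
      (occ s k.+1 == 0) || G (occ s k.+1) i].

Definition first_avail (G : rel nat) (n : nat) (s : seq nat) (i a : nat)
  : option nat :=
  ohead [seq k <- iota a (n.+1 - a) | available G s i k].

(* Friendship parking process: cars 1..n enter in order; car i prefers p_i
   (= p`_(i-1)).  Returns Some (final lot) if all cars park, None otherwise. *)
Definition fpark (G : rel nat) (n : nat) (p : seq nat) : option (seq nat) :=
  foldl (fun (st : option (seq nat)) (i : nat) =>
           match st with
           | None => None
           | Some s =>
               match first_avail G n s i (nth 0 p i.-1) with
               | None => None
               | Some k => Some (set_nth 0 s k.-1 i)
               end
           end)
        (Some (nseq n 0)) (iota 1 n).

Fixpoint words (m : nat) (A : seq nat) : seq (seq nat) :=
  if m is m'.+1 then [seq x :: w | x <- A, w <- words m' A] else [:: [::]].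

Definition prefs (n : nat) : seq (seq nat) := words n (iota 1 n).

Definition num_fpf_outcome (G : rel nat) (n : nat) (pi : seq nat) : nat :=
  count (fun p => fpark G n p == Some pi) (prefs n).

(* Blockers: the entry at (0-based) position t of pi is a blocker for i. *)
Definition nbrs (pi : seq nat) (t : nat) : seq nat :=
  (if 0 < t then [:: nth 0 pi t.-1] else [::]) ++
  (if t.+1 < size pi then [:: nth 0 pi t.+1] else [::]).

Definition blocker (G : rel nat) (pi : seq nat) (i t : nat) : bool :=
  let j := nth 0 pi t in
  (j <= i) || ((i < j) && has (fun l => (l < i) && ~~ G l i) (nbrs pi t)).

(* Blocking sequence B(i, pi, G): the longest contiguous block of pi ending at
   i all of whose entries are blockers for i. *)
Definition blocking_seq (i : nat) (pi : seq nat) (G : rel nat) : seq nat :=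
  let t := index i pi in
  let r := find (fun d => ~~ blocker G pi i (t - d)) (iota 0 t.+1) in
  drop (t.+1 - r) (take t.+1 pi).

Definition Inc (n i : nat) : seq nat := iota i (n.+1 - i) ++ iota 1 i.-1.

(* Main.v *)
Require Import Defs.
From mathcomp Require Import all_boot zify.
Set Implicit Arguments.
Unset Strict Implicit.
Unset Printing Implicit Defensive.

Lemma ohead_fi (P : pred nat) a len x :
  ohead [seq k <- iota a len | P k] = Some x ->
  [/\ a <= x < a + len, P x & forall y, a <= y < x -> ~~ P y].
Proof.
elim: len a => [|len IH] a //=. case: ifP => Pa /=.
- move=> [<-]; split => //; first lia. move=> y hy; exfalso; lia.
- move/IH => [h1 h2 h3]; split => //; first lia.
  move=> y hy. case: (y =P a) => [->|ne]; first by rewrite Pa.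
  apply: h3; lia.
Qed.

Lemma ohead_fi_intro (P : pred nat) a len x :
  a <= x < a + len -> P x -> (forall y, a <= y < x -> ~~ P y) ->
  ohead [seq k <- iota a len | P k] = Some x.
Proof.
elim: len a => [|len IH] a /=; first by move=> h; exfalso; lia.
move=> h1 h2 h3. case: ifP => Pa /=.
- case: (x =P a) => [->//|ne]. have := h3 a. rewrite Pa. move=> h; exfalso.
  have: ~~ true by apply: h; lia. by [].
- apply: IH => //.
  + case: (x =P a) => [e|ne]; last lia. by move: Pa; rewrite -e h2.
  + move=> y hy; apply: h3; lia.
Qed.

Lemma words_mem m (A : seq nat) p : p \in words m A -> size p = m /\ all (mem A) p.
Proof.
elim: m p => [|m IH] p /=; first by rewrite inE => /eqP ->.
case/allpairsP => [[x w]] /= [hx hw ->]. have [h1 h2] := IH _ hw.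
by rewrite /= h1 hx h2.
Qed.

Lemma sumn_mulb (A : seq nat) (b : pred nat) c :
  sumn [seq b x * c | x <- A] = count b A * c.
Proof. elim: A => //= x A ->. by rewrite mulnDl. Qed.

Lemma count_words m (A : seq nat) (P : nat -> pred nat) :
  count (fun w => all (fun k => P k (nth 0 w k)) (iota 0 m)) (words m A) =
  \prod_(0 <= k < m) count (P k) A.
Proof.
elim: m P => [|m IH] P; first by rewrite big_geq.
rewrite big_nat_recl // -(IH (fun k => P k.+1)) /=.
rewrite count_flatten -map_comp.
rewrite (eq_map (g := fun x => P 0 x * count (fun w => all (fun k => P k.+1 (nth 0 w k)) (iota 0 m)) (words m A))).
  by rewrite sumn_mulb.
move=> x /=. rewrite count_map. case: (boolP (P 0 x)) => h /=.
- rewrite mul1n. apply: eq_count => w /=. rewrite h /=.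
  by rewrite -addn1 addnC iotaDl all_map.
- rewrite mul0n. apply/eqP; rewrite -leqn0 leqNgt -has_count; apply/hasPn => w _ /=.
  by rewrite (negbTE h).
Qed.

Lemma count_window n L U : U <= n ->
  count (fun a => (L < a) && (a <= U)) (iota 1 n) = U - L.
Proof.
elim: n L U => [|n IH] L U hU; first by have ->: U = 0 by lia.
have ->: iota 1 n.+1 = iota 1 n ++ [:: n.+1] by have := iotaD 1 n 1; rewrite addn1 add1n => ->.
rewrite count_cat /= addn0.
case: (ltnP U n.+1) => h.
- rewrite IH; last lia. by rewrite andbF addn0.
- have ->: U = n.+1 by lia.
  rewrite (eq_in_count (a2 := fun a => (L < a) && (a <= n))); last first.
    move=> a; rewrite mem_iota => ha. have ->: (a <= n.+1) = (a <= n) by lia. by [].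
  rewrite IH // andbT. case: (ltnP L n.+1) => hl /=; lia.
Qed.


Definition hamp (n : nat) (G : rel nat) (pi : seq nat) : Prop :=
 [/\ size pi = n, uniq pi, (forall x, x \in pi -> 0 < x <= n),
     (forall j, 0 < j <= n -> j \in pi) &
     (forall q, q.+1 < n -> G (nth 0 pi q) (nth 0 pi q.+1) && G (nth 0 pi q.+1) (nth 0 pi q))].

Definition gm (m x : nat) := if x <= m then x else 0.
Definition stt (m : nat) (pi : seq nat) := [seq gm m x | x <- pi].

Lemma gm0 m : gm m 0 = 0. Proof. by []. Qed.

Lemma nth_stt m pi k : nth 0 (stt m pi) k = gm m (nth 0 pi k).
Proof.
case: (ltnP k (size pi)) => h; first by rewrite (nth_map 0).
by rewrite !nth_default ?size_map // gm0.
Qed.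

Lemma occ_stt m pi k : occ (stt m pi) k = gm m (occ pi k).
Proof. case: k => [|k] /=; [by rewrite gm0 | exact: nth_stt]. Qed.

Lemma nth_pos n G pi k : hamp n G pi -> k < n -> 0 < nth 0 pi k <= n.
Proof. case=> hs _ hr _ _ hk. apply: hr; apply: mem_nth; by rewrite hs. Qed.

Lemma nth_out n G pi k : hamp n G pi -> n <= k -> nth 0 pi k = 0.
Proof. case=> hs _ _ _ _ hk. apply: nth_default; lia. Qed.

Definition rB G pi j := find (fun d => ~~ blocker G pi j (index j pi - d)) (iota 0 (index j pi).+1).

Lemma idx_lt n G pi j : hamp n G pi -> 0 < j <= n -> index j pi < n.
Proof. case=> hs _ _ ha _ hj. rewrite -hs index_mem. exact: ha. Qed.

Lemma avail_pos n G pi m : hamp n G pi -> m < n ->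
  available G (stt m pi) m.+1 (index m.+1 pi).+1.
Proof.
move=> H hm. have ht : index m.+1 pi < n by apply: (idx_lt H); lia.
case: (H) => hs hu hr ha hh.
set t := index m.+1 pi in ht *.
have hnt : nth 0 pi t = m.+1 by rewrite nth_index //; apply: ha; lia.
rewrite /available !occ_stt /= hnt /gm ltnn eqxx /=.
apply/andP; split.
- case: t ht hnt => [//|t'] ht hnt /=. case: ifP => _ //=.
  by have := hh t' ht; rewrite hnt => /andP[-> _]; rewrite orbT.
- case: (ltnP t.+1 n) => h2.
  + case: ifP => _ //=. by have := hh t h2; rewrite hnt => /andP[_ ->]; rewrite orbT.
  + by rewrite (nth_out H h2).
Qed.

Lemma avail_blk n G pi m q : hamp n G pi -> m < n -> q < index m.+1 pi ->
  blocker G pi m.+1 q -> ~~ available G (stt m pi) m.+1 q.+1.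
Proof.
move=> H hm hq hb. have ht : index m.+1 pi < n by apply: (idx_lt H); lia.
case: (H) => hs hu hr ha hh.
have hqn : q < n by lia.
have hx : nth 0 pi q != m.+1.
  apply/eqP => e. have := index_uniq 0 (_ : q < size pi) hu. rewrite hs e => h.
  have := h hqn. lia.
apply/negP; rewrite /available !occ_stt => /and3P [h1 h2 h3].
move: hb; rewrite /blocker; case/orP.
- move=> hle. move: h1. rewrite /= /gm. have hp := nth_pos H hqn.
  have ->: nth 0 pi q <= m by lia. lia.
- case/andP => hgt /hasP [l hl /andP[hl1 hl2]].
  have hl0 : gm m l = l by rewrite /gm; have ->: l <= m by lia.
  move: hl; rewrite /nbrs mem_cat; case/orP.
  + case: q hq hqn hx h1 h2 h3 hgt => [|q'] hq hqn hx h1 h2 h3 hgt //=.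
    rewrite inE => /eqP e. move: h2. rewrite /= -e hl0 (negbTE hl2) orbF.
    have := nth_pos H (_ : q' < n). rewrite -e. move=> hp. have {}hp := hp ltac:(lia). lia.
  + rewrite hs. case: ifP => hq1 //. rewrite inE => /eqP e.
    move: h3. rewrite /= -e hl0 (negbTE hl2) orbF.
    have := nth_pos H hq1. rewrite -e. lia.
Qed.

Lemma avail_nonblk n G pi m q : hamp n G pi -> m < n -> q < index m.+1 pi ->
  ~~ blocker G pi m.+1 q -> available G (stt m pi) m.+1 q.+1.
Proof.
move=> H hm hq hb. case: (H) => hs hu hr ha hh.
move: hb; rewrite /blocker negb_or => /andP[hx hb].
have hgt : m.+1 < nth 0 pi q by lia.
rewrite hgt /= in hb. move/hasPn: hb => hb.
have key : forall l, l \in nbrs pi q -> (gm m l == 0) || G (gm m l) m.+1.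
  move=> l hl. have := hb l hl. rewrite /gm. case: ifP => hlm; last by rewrite eqxx.
  have ->: l < m.+1 by lia. by rewrite /= negbK orbC => ->.
rewrite /available !occ_stt /= {1}/gm.
have ->: (nth 0 pi q <= m) = false by lia.
rewrite eqxx /=. apply/andP; split.
- case: q hq hb key hgt hx => [|q'] hq hb key hgt hx //=.
  apply: key. by rewrite /nbrs /= inE eqxx.
- case: (ltnP q.+1 n) => h2.
  + apply: key. by rewrite /nbrs mem_cat hs h2 inE eqxx orbT.
  + by rewrite (nth_out H h2) gm0.
Qed.

Definition W G pi j a := ((index j pi).+1 - rB G pi j < a) && (a <= (index j pi).+1).

Lemma rB_le G pi j : rB G pi j <= (index j pi).+1.
Proof. by have := find_size (fun d => ~~ blocker G pi j (index j pi - d)) (iota 0 (index j pi).+1); rewrite size_iota. Qed.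

Lemma blk_before G pi j d : d < rB G pi j -> blocker G pi j (index j pi - d).
Proof.
move=> hd. have := before_find 0 hd. rewrite nth_iota; last by have := rB_le G pi j; lia.
by rewrite add0n => /negbFE.
Qed.

Lemma nonblk_at G pi j : rB G pi j < (index j pi).+1 -> ~~ blocker G pi j (index j pi - rB G pi j).
Proof.
move=> h. have hh : has (fun d => ~~ blocker G pi j (index j pi - d)) (iota 0 (index j pi).+1).
  by rewrite has_find size_iota.
have := nth_find 0 hh. by rewrite -/(rB G pi j) nth_iota // add0n.
Qed.

Lemma rB_pos n G pi j : hamp n G pi -> 0 < j <= n -> 0 < rB G pi j.
Proof.
move=> H hj. case: (H) => hs hu hr ha hh.
rewrite lt0n; apply/eqP => e.
have := nonblk_at (G:=G) (pi:=pi) (j:=j). rewrite e subn0 => h.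
have := h is_true_true. rewrite /blocker nth_index ?leqnn //. exact: ha.
Qed.

Lemma step1 n G pi m a : hamp n G pi -> m < n -> 0 < a <= n -> W G pi m.+1 a ->
  first_avail G n (stt m pi) m.+1 a = Some (index m.+1 pi).+1.
Proof.
move=> H hm ha /andP[w1 w2]. have ht : index m.+1 pi < n by apply: (idx_lt H); lia.
have hr := rB_le G pi m.+1.
rewrite /first_avail; apply: ohead_fi_intro; first lia.
  exact: (avail_pos H hm).
move=> [|q] hy; first (exfalso; lia).
apply: (avail_blk H hm); first lia.
have := blk_before (G:=G) (pi:=pi) (j:=m.+1) (d:=index m.+1 pi - q) ltac:(lia).
by have ->: index m.+1 pi - (index m.+1 pi - q) = q by lia.
Qed.

Lemma step2 n G pi m a : hamp n G pi -> m < n -> 0 < a <= n ->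
  first_avail G n (stt m pi) m.+1 a = Some (index m.+1 pi).+1 -> W G pi m.+1 a.
Proof.
move=> H hm ha. have ht : index m.+1 pi < n by apply: (idx_lt H); lia.
have hr := rB_le G pi m.+1. have hr0 := rB_pos H (_ : 0 < m.+1 <= n).
rewrite /first_avail => /ohead_fi [h1 h2 h3].
rewrite /W. apply/andP; split; last lia.
case: (ltnP ((index m.+1 pi).+1 - rB G pi m.+1) a) => // hle.
have hlt : rB G pi m.+1 < (index m.+1 pi).+1.
  case: (ltnP (rB G pi m.+1) (index m.+1 pi).+1) => // hge. exfalso; lia.
have := h3 (index m.+1 pi - rB G pi m.+1).+1 ltac:(have := hr0 ltac:(lia); lia).
rewrite (avail_nonblk H hm) //. have := hr0 ltac:(lia); lia.
exact: nonblk_at.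
Qed.

Definition stepf (G : rel nat) (n : nat) (p : seq nat) :=
  fun (st : option (seq nat)) (i : nat) =>
           match st with
           | None => None
           | Some s =>
               match first_avail G n s i (nth 0 p i.-1) with
               | None => None
               | Some k => Some (set_nth 0 s k.-1 i)
               end
           end.

Lemma fparkE G n p : fpark G n p = foldl (stepf G n p) (Some (nseq n 0)) (iota 1 n).
Proof. by []. Qed.

Definition bad (pi : seq nat) (st : option (seq nat)) : Prop :=
  if st is Some s then exists k, nth 0 s k != 0 /\ nth 0 s k != nth 0 pi k else True.

Definition good G pi (p : seq nat) m := all (fun k => W G pi k.+1 (nth 0 p k)) (iota 0 m).

Lemma iotaSr k m : iota k m.+1 = iota k m ++ [:: k + m].
Proof. by have := iotaD k m 1; rewrite addn1 => ->. Qed.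

Lemma fold_inv n G pi p m : hamp n G pi -> (forall k, k < n -> 0 < nth 0 p k <= n) -> m <= n ->
 (good G pi p m -> foldl (stepf G n p) (Some (nseq n 0)) (iota 1 m) = Some (stt m pi)) /\
 (~~ good G pi p m -> bad pi (foldl (stepf G n p) (Some (nseq n 0)) (iota 1 m))).
Proof.
move=> H hp. case: (H) => hs hu hr ha hh.
elim: m => [|m IH] hm.
- split => // _ /=. congr Some. apply: (@eq_from_nth _ 0); first by rewrite size_nseq size_map hs.
  move=> k; rewrite size_nseq => hk. rewrite nth_nseq hk nth_stt /gm.
  have := nth_pos H hk. case: ifP => //; lia.
- have [IH1 IH2] := IH (ltnW hm).
  rewrite iotaSr foldl_cat /good iotaSr all_cat /= andbT -/(good G pi p m) add1n add0n.
  have ht : index m.+1 pi < n by apply: (idx_lt H); lia.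
  have hpm := hp m hm.
  case: (boolP (good G pi p m)) => hg /=.
  + rewrite (IH1 hg) /=.
    case: (boolP (W G pi m.+1 (nth 0 p m))) => hw.
    * rewrite (step1 H hm hpm hw); split => // _. congr Some.
      apply: (@eq_from_nth _ 0).
        by rewrite size_set_nth !size_map hs; lia.
      move=> k _. rewrite nth_set_nth /= !nth_stt /=.
      case: (k =P index m.+1 pi) => [->|hk].
      -- rewrite nth_index; last by apply: ha; lia. by rewrite /gm leqnn.
      -- rewrite /gm. case: (ltnP k n) => hkn; last by rewrite (nth_out H hkn).
         have hne : nth 0 pi k != m.+1.
           apply/eqP => e. apply: hk. by rewrite -e index_uniq ?hs.
         case: ifP => h1; first by have ->: nth 0 pi k <= m.+1 by lia.
         have ->: nth 0 pi k <= m.+1 = false by lia. by [].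
    * split => // _. case e: (first_avail G n (stt m pi) m.+1 (nth 0 p m)) => [k|] //=.
      have [h1 h2 h3] := ohead_fi e.
      exists k.-1. rewrite nth_set_nth /= eqxx. split => //.
      apply/eqP => e2. have hk : k.-1 < n by lia.
      have e3 : index m.+1 pi = k.-1 by rewrite e2 index_uniq ?hs.
      move: hw. rewrite (step2 H hm hpm) //. rewrite e e3. congr Some. lia.
  + split => // _. have := IH2 hg.
    case: (foldl (stepf G n p) (Some (nseq n 0)) (iota 1 m)) => [s|] //= [k0 [h1 h2]].
    case e: (first_avail G n s m.+1 (nth 0 p m)) => [k|] //=.
    have [e1 e2 e3] := ohead_fi e.
    exists k0. rewrite nth_set_nth /=.
    have hk : k.-1 != k0.
      apply/eqP => ek. move: e2 => /and3P [o _ _]. move: o. 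
      have hk1 : k = k.-1.+1 by lia.
      rewrite hk1 /= ek. by move: h1 => /negbTE ->.
    by rewrite eq_sym in hk; rewrite (negbTE hk).
Qed.

Lemma stt_n n G pi : hamp n G pi -> stt n pi = pi.
Proof.
case=> hs hu hr ha hh. apply: map_id_in => x hx. rewrite /gm.
have := hr x hx. by case: ifP => //; lia.
Qed.

Lemma num_fpf_prod n G pi : hamp n G pi ->
  num_fpf_outcome G n pi = \prod_(0 <= k < n) size (blocking_seq k.+1 pi G).
Proof.
move=> H. case: (H) => hs hu hr ha hh.
rewrite /num_fpf_outcome /prefs.
rewrite (eq_in_count (a2 := fun p => all (fun k => W G pi k.+1 (nth 0 p k)) (iota 0 n))).
- rewrite (count_words n (iota 1 n) (fun k => W G pi k.+1)). apply: eq_big_nat => k hk.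
  have ht : index k.+1 pi < n by apply: (idx_lt H); lia.
  have hr1 := rB_le G pi k.+1.
  rewrite /W count_window //. rewrite /blocking_seq size_drop size_takel; last by rewrite hs.
  rewrite -/(rB G pi k.+1). lia.
- move=> p hp. have [hsz hall] := words_mem hp.
  have hp' : forall k, k < n -> 0 < nth 0 p k <= n.
    move=> k hk. move/allP: hall => hall.
    have h : nth 0 p k \in iota 1 n by apply: hall; apply: mem_nth; rewrite hsz.
    rewrite mem_iota in h. lia.
  rewrite fparkE. have [h1 h2] := fold_inv H hp' (leqnn n).
  case: (boolP (good G pi p n)) => g.
  + by rewrite h1 // (stt_n H) eqxx.
  + have := h2 g. rewrite -/(good G pi p n) (negbTE g).
    case: (foldl (stepf G n p) (Some (nseq n 0)) (iota 1 n)) => [s|] //= [k [k1 k2]].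
    apply/eqP => [[e]]. by rewrite e eqxx in k2.
Qed.


Lemma sizeInc n i : 1 <= i <= n -> size (Inc n i) = n.
Proof. move=> h; rewrite /Inc size_cat !size_iota; lia. Qed.

Lemma nthInc n i k : 1 <= i <= n -> nth 0 (Inc n i) k =
  if k < n.+1 - i then i + k else if k < n then k - (n.+1 - i) + 1 else 0.
Proof.
move=> h. rewrite /Inc nth_cat size_iota. case: ifP => h1; first by rewrite nth_iota.
case: ifP => h2; first by rewrite nth_iota; lia.
rewrite nth_default // size_iota; lia.
Qed.

Lemma hampInc n i : 3 <= n -> 1 <= i <= n -> hamp n (cycle_adj n) (Inc n i).
Proof.
move=> hn hi. split.
- exact: sizeInc.
- rewrite /Inc cat_uniq !iota_uniq andbT /=. apply/hasPn => x; rewrite !mem_iota => hx.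
  lia.
- move=> x; rewrite /Inc mem_cat !mem_iota; lia.
- move=> j hj; rewrite /Inc mem_cat !mem_iota; lia.
- move=> q hq. rewrite !nthInc // /cycle_adj.
  case: ifP => h1; case: ifP => h2; try case: ifP => h3; try case: ifP => h4; lia.
Qed.

Lemma drop_take_map (s : seq nat) a b : b <= size s ->
  drop a (take b s) = [seq nth 0 s k | k <- iota a (b - a)].
Proof.
move=> hb. apply: (@eq_from_nth _ 0).
  by rewrite size_drop size_takel // size_map size_iota.
move=> k; rewrite size_drop size_takel // => hk.
rewrite nth_drop nth_take; last lia.
by rewrite (nth_map 0) ?size_iota // nth_iota.
Qed.

Lemma blocking_seqE G pi j : index j pi < size pi ->
  blocking_seq j pi G = [seq nth 0 pi k | k <- iota ((index j pi).+1 - rB G pi j) (rB G pi j)].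
Proof.
move=> h. rewrite /blocking_seq -/(rB G pi j) drop_take_map //.
have := rB_le G pi j. move=> h2. by have ->: (index j pi).+1 - ((index j pi).+1 - rB G pi j) = rB G pi j by lia.
Qed.

Lemma find_iota_eq (a : pred nat) m N r : r <= N -> (forall d, d < r -> ~~ a (m + d)) ->
  (r < N -> a (m + r)) -> find a (iota m N) = r.
Proof.
elim: N m r => [|N IH] m r /=; first by move=> h _ _; lia.
move=> h1 h2 h3. case: r h1 h2 h3 => [|r] h1 h2 h3.
- by rewrite -{1}(addn0 m) h3.
- have := h2 0 is_true_true. rewrite addn0 => /negbTE ->. congr S.
  apply: IH; first lia.
  + move=> d hd. rewrite addSnnS. apply: h2; lia.
  + move=> hr. rewrite addSnnS. apply: h3; lia.
Qed.

Lemma rB_eq G pi j r : r <= (index j pi).+1 ->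
  (forall d, d < r -> blocker G pi j (index j pi - d)) ->
  (r < (index j pi).+1 -> ~~ blocker G pi j (index j pi - r)) -> rB G pi j = r.
Proof.
move=> h1 h2 h3. apply: find_iota_eq => [|d hd|hr].
- by [].
- rewrite add0n negbK; exact: h2.
- rewrite add0n; exact: h3.
Qed.

Lemma map_iota_eq (f : nat -> nat) a c L : (forall k, k < L -> f (a + k) = c + k) ->
  [seq f x | x <- iota a L] = iota c L.
Proof.
elim: L a c => [|L IH] a c //= h. congr cons.
  by have := h 0 is_true_true; rewrite !addn0.
apply: IH => k hk. rewrite !addSnnS. apply: h; lia.
Qed.

Lemma blk_le G pi j q : nth 0 pi q <= j -> blocker G pi j q.
Proof. by rewrite /blocker => ->. Qed.

Lemma idxInc n i j : 1 <= i <= n -> 1 <= j <= n ->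
  index j (Inc n i) = if i <= j then j - i else n.+1 - i + j.-1.
Proof.
move=> hi hj. have H3 : uniq (Inc n i).
  rewrite /Inc cat_uniq !iota_uniq andbT /=. apply/hasPn => x; rewrite !mem_iota => hx. lia.
have ht : (if i <= j then j - i else n.+1 - i + j.-1) < size (Inc n i).
  rewrite sizeInc //; case: ifP => ?; lia.
have e : nth 0 (Inc n i) (if i <= j then j - i else n.+1 - i + j.-1) = j.
  rewrite nthInc //. case: (leqP i j) => h0 /=; repeat case: ifP => ?; lia.
by rewrite -{1}e index_uniq.
Qed.

Lemma bsInc n i j : 3 <= n -> 1 <= i <= n -> 1 <= j <= n ->
  blocking_seq j (Inc n i) (cycle_adj n) =
  if i <= j then iota i (j.+1 - i) else if 3 <= j then n :: iota 1 j else iota 1 j.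
Proof.
move=> hn hi hj. have H := hampInc hn hi.
have hjl : 0 < j <= n by lia.
rewrite blocking_seqE; last by rewrite sizeInc // (idx_lt H hjl).
case: (leqP i j) => h0.
- have hr : rB (cycle_adj n) (Inc n i) j = (j - i).+1.
    apply: rB_eq; rewrite idxInc // h0.
    + lia.
    + move=> d hd. apply: blk_le. rewrite nthInc //. repeat case: ifP => ?; lia.
    + move=> h; exfalso; lia.
  rewrite hr idxInc // h0 subnn. have ->: j.+1 - i = (j - i).+1 by lia.
  apply: map_iota_eq => k hk. rewrite nthInc //; repeat case: ifP => ?; lia.
- have h0' : (i <= j) = false by lia.
  case: (leqP 3 j) => h3.
  + have hr : rB (cycle_adj n) (Inc n i) j = j.+1.
      apply: rB_eq; rewrite idxInc // h0'.
      * lia.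
      * move=> d hd. case: (ltnP d j) => hdj.
          apply: blk_le. rewrite nthInc //. repeat case: ifP => ?; lia.
        have ->: n.+1 - i + j.-1 - d = n - i by lia.
        rewrite /blocker /nbrs sizeInc // !nthInc //.
        repeat case: ifP => ?; rewrite /= ?/cycle_adj; lia.
      * move=> hr. have ->: n.+1 - i + j.-1 - j.+1 = (n - i).-1 by lia.
        rewrite /blocker /nbrs sizeInc // !nthInc //.
        repeat case: ifP => ?; rewrite /= ?/cycle_adj; lia.
    rewrite hr idxInc // h0'. have ->: (n.+1 - i + j.-1).+1 - j.+1 = n - i by lia.
    rewrite /=. congr cons.
      rewrite nthInc //; repeat case: ifP => ?; lia.
    rewrite -addn1 addnC. apply: map_iota_eq => k hk. rewrite nthInc //; repeat case: ifP => ?; lia.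
  + have hr : rB (cycle_adj n) (Inc n i) j = j.
      apply: rB_eq; rewrite idxInc // h0'.
      * lia.
      * move=> d hd. apply: blk_le. rewrite nthInc //. repeat case: ifP => ?; lia.
      * move=> hr. have ->: n.+1 - i + j.-1 - j = n - i by lia.
        rewrite /blocker /nbrs sizeInc // !nthInc //.
        repeat case: ifP => ?; rewrite /= ?/cycle_adj; lia.
    rewrite hr idxInc // h0'. have ->: (n.+1 - i + j.-1).+1 - j = n.+1 - i by lia.
    apply: map_iota_eq => k hk. rewrite nthInc //; repeat case: ifP => ?; lia.
Qed.


Lemma prod_succ m : \prod_(0 <= k < m) k.+1 = m`!.
Proof. elim: m => [|m IH]; first by rewrite big_geq. by rewrite big_nat_recr // IH factS mulnC. Qed.

Lemma prod_shift a m : \prod_(a <= k < a + m) (k.+1 - a) = m`!.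
Proof.
rewrite -{1}(add0n a) big_addn. have ->: a + m - a = m by lia.
rewrite -prod_succ. apply: eq_big_nat => k hk. lia.
Qed.

Definition G3f k := if k == 0 then 1 else if k == 1 then 2 else k.+2.

Lemma prod_G3 m : 2 <= m -> 3 * \prod_(0 <= k < m) G3f k = m.+1`!.
Proof.
elim: m => [|m IH] hm; first by [].
case: (ltnP m 2) => h.
- have -> : m = 1 by lia. by rewrite !big_nat_recr // big_geq.
- rewrite big_nat_recr // mulnA IH // factS /G3f.
  have ->: (m == 0) = false by lia. have ->: (m == 1) = false by lia. by rewrite mulnC.
Qed.

Lemma numInc n i : 3 <= n -> 1 <= i <= n ->
  num_fpf_outcome (cycle_adj n) n (Inc n i) =
  (\prod_(0 <= k < i.-1) (if 3 <= k.+1 then k.+2 else k.+1)) * (n.+1 - i)`!.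
Proof.
move=> hn hi. rewrite (num_fpf_prod (hampInc hn hi)).
rewrite (big_cat_nat _ (n := i.-1)) //=; last lia.
congr (_ * _).
- apply: eq_big_nat => k hk. rewrite bsInc //; last lia.
  have ->: (i <= k.+1) = false by lia. case: ifP => _ /=; by rewrite size_iota.
- rewrite -(prod_shift i.-1 (n.+1 - i)).
  have ->: i.-1 + (n.+1 - i) = n by lia. apply: eq_big_nat => k hk.
  idtac.
  rewrite bsInc //; last lia. have ->: i <= k.+1 by lia. rewrite size_iota. lia.
Qed.

Unset Implicit Arguments.
Set Strict Implicit.

Theorem proposition2p9 (n i : nat) :
  3 <= n -> 1 <= i <= n ->
  (4 <= i ->
     (forall j, 1 <= j <= n ->
        blocking_seq j (Inc n i) (cycle_adj n) =
          (if i <= j then iota i (j.+1 - i)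
           else if 3 <= j then n :: iota 1 j
           else if j == 2 then [:: 1; 2]
           else [:: 1])) /\
     num_fpf_outcome (cycle_adj n) n (Inc n i) = ((n - i).+1)`! * i`! %/ 3) /\
  (i <= 3 ->
     (forall j, 1 <= j <= n ->
        blocking_seq j (Inc n i) (cycle_adj n) =
          (if i <= j then iota i (j.+1 - i) else iota 1 j)) /\
     num_fpf_outcome (cycle_adj n) n (Inc n i) = (n.+1 - i)`! * (i.-1)`!).
Proof.
move=> hn hi. split => h4; split.
- move=> j hj. rewrite bsInc //. case: ifP => // hij. case: ifP => // h3.
  case: (j =P 2) => [->//|ne]. by have ->: j = 1 by lia.
- rewrite numInc //.
  have -> : \prod_(0 <= k < i.-1) (if 3 <= k.+1 then k.+2 else k.+1) = \prod_(0 <= k < i.-1) G3f k.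
    apply: eq_big_nat => k hk. rewrite /G3f. case: ifP => h; repeat case: ifP => ?; lia.
  have -> : i`! = 3 * \prod_(0 <= k < i.-1) G3f k.
    rewrite prod_G3; last lia. by have ->: (i.-1).+1 = i by lia.
  rewrite mulnCA mulKn // mulnC. by have ->: n.+1 - i = (n - i).+1 by lia.
- move=> j hj. rewrite bsInc //. case: ifP => // hij. by have ->: (3 <= j) = false by lia.
- rewrite numInc // -(prod_succ i.-1) mulnC. congr (_ * _). apply: eq_big_nat => k hk.
  have ->: (3 <= k.+1) = false by lia. by [].
Qed.
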